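(* Assume $\mathbb F$ is algebraically closed with $\operatorname{char}\mathbb F=0$. There is a five-dimensional $\Re$-module $V$ with basis $v_0,\dots,v_4$ on which $A,B,C,D$ are represented by $\tfrac14$ times the matrices $\begin{pmatrix}15&0&0&0&0\\4&3&0&0&0\\0&4&-1&0&0\\0&0&4&3&0\\0&0&0&4&15\end{pmatrix}$, $\begin{pmatrix}15&-36&0&0&0\\0&3&-6&0&0\\0&0&-1&-6&0\\0&0&0&3&-36\\0&0&0&0&15\end{pmatrix}$, $\begin{pmatrix}-9&36&0&0&0\\-4&15&6&0&0\\0&-4&23&6&0\\0&0&-4&15&36\\0&0&0&-4&-9\end{pmatrix}$, $\begin{pmatrix}18&-54&0&0&0\\6&-15&-3&0&0\\0&2&0&3&0\\0&0&-2&15&54\\0&0&0&-6&-18\end{pmatrix}$ respectively. On $V$ one has $\alpha=\beta=\gamma=0$, $V$ is irreducible, and each of $A,B,C$ has minimal polynomial $(x+\tfrac14)(x-\tfrac34)^2(x-\tfrac{15}4)^2$ on $V$; in particular none of $A,B,C$ is diagonalizable on $V$.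
   Context: The Racah algebra $\Re$ is the unital associative $\mathbb F$-algebra with generators $A,B,C,D$ and relations $[A,B]=[B,C]=[C,A]=2D$ together with the requirement that each of $\alpha:=[A,D]+AC-BA$, $\beta:=[B,D]+BA-CB$, $\gamma:=[C,D]+CB-AC$ is central in $\Re$. Matrices act on column coordinate vectors with respect to the basis $v_0,\dots,v_4$ (the $j$-th column gives the image of $v_j$). *)

(* Defs.v *)
From HB Require Import structures.
From mathcomp Require Import all_boot all_order all_algebra.
Set Implicit Arguments. Unset Strict Implicit. Unset Printing Implicit Defensive.
Import Order.TTheory GRing.Theory Num.Theory.
Local Open Scope ring_scope.

(* Convention: an operator on V = F^5 with basis v_0..v_4 is represented by the
   matrix M : 'M[F]_5 acting on COLUMN coordinate vectors (w |-> M *m w);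
   entry M i j is the coefficient of v_i in the image of v_j (the j-th column
   gives the image of v_j). *)

Definition quarter_mx (F : fieldType) (rows : seq (seq int)) : 'M[F]_5 :=
  \matrix_(i < 5, j < 5) (((nth [::] rows i)`_j)%:~R / 4%:R).

Definition mxA (F : fieldType) : 'M[F]_5 := quarter_mx F
  [:: [:: 15; 0; 0; 0; 0];
      [:: 4; 3; 0; 0; 0];
      [:: 0; 4; -1; 0; 0];
      [:: 0; 0; 4; 3; 0];
      [:: 0; 0; 0; 4; 15]].

Definition mxB (F : fieldType) : 'M[F]_5 := quarter_mx F
  [:: [:: 15; -36; 0; 0; 0];
      [:: 0; 3; -6; 0; 0];
      [:: 0; 0; -1; -6; 0];
      [:: 0; 0; 0; 3; -36];
      [:: 0; 0; 0; 0; 15]].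

Definition mxC (F : fieldType) : 'M[F]_5 := quarter_mx F
  [:: [:: -9; 36; 0; 0; 0];
      [:: -4; 15; 6; 0; 0];
      [:: 0; -4; 23; 6; 0];
      [:: 0; 0; -4; 15; 36];
      [:: 0; 0; 0; -4; -9]].

Definition mxD (F : fieldType) : 'M[F]_5 := quarter_mx F
  [:: [:: 18; -54; 0; 0; 0];
      [:: 6; -15; -3; 0; 0];
      [:: 0; 2; 0; 3; 0];
      [:: 0; 0; -2; 15; 54];
      [:: 0; 0; 0; -6; -18]].

Definition comm_op (R : pzRingType) (n : nat) (X Y : 'M[R]_n) : 'M[R]_n :=
  X *m Y - Y *m X.

Definition racah_alpha (R : pzRingType) n (A B C D : 'M[R]_n) : 'M[R]_n :=
  comm_op A D + A *m C - B *m A.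
Definition racah_beta (R : pzRingType) n (A B C D : 'M[R]_n) : 'M[R]_n :=
  comm_op B D + B *m A - C *m B.
Definition racah_gamma (R : pzRingType) n (A B C D : 'M[R]_n) : 'M[R]_n :=
  comm_op C D + C *m B - A *m C.

Definition central_in (R : pzRingType) n (A B C D X : 'M[R]_n) : Prop :=
  [/\ comm_op X A = 0, comm_op X B = 0, comm_op X C = 0 & comm_op X D = 0].

Definition racah_module (R : pzRingType) n (A B C D : 'M[R]_n) : Prop :=
  [/\ comm_op A B = 2%:R *: D, comm_op B C = 2%:R *: D
    & comm_op C A = 2%:R *: D] /\
  [/\ central_in A B C D (racah_alpha A B C D),
      central_in A B C D (racah_beta A B C D)
    & central_in A B C D (racah_gamma A B C D)].

(* A subspace W of column vectors is encoded by a matrix U whose row space is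
   {w^T | w in W}.  W is invariant under the operator M (w in W -> M w in W)
   iff the row space of U is stable under M^T. *)
Definition op_invariant (F : fieldType) n (U M : 'M[F]_n) : bool :=
  (U *m M^T <= U)%MS.

Definition racah_irreducible (F : fieldType) n (A B C D : 'M[F]_n) : Prop :=
  (0 < n)%N /\
  forall U : 'M[F]_n,
    op_invariant U A -> op_invariant U B -> op_invariant U C ->
    op_invariant U D -> U == 0 \/ row_full U.

Definition racah_minpoly (F : fieldType) : {poly F} :=
  ('X + (1 / 4%:R)%:P) * ('X - (3%:R / 4%:R)%:P) ^+ 2
    * ('X - (15%:R / 4%:R)%:P) ^+ 2.

(* Main.v *)
Require Import Defs.
From HB Require Import structures.
From mathcomp Require Import all_boot all_order all_algebra ring.
Set Implicit Arguments. Unset Strict Implicit. Unset Printing Implicit Defensive.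
Import GRing.Theory.
Local Open Scope ring_scope.

Definition lget (l : seq (seq int)) (i j : nat) : int := nth 0 (nth [::] l i) j.
Definition mkF (R : pzRingType) m n (l : seq (seq int)) : 'M[R]_(m,n) :=
  \matrix_(i < m, j < n) (lget l i j)%:~R.
Definition lmat m n (f : nat -> nat -> int) : seq (seq int) := mkseq (fun i => mkseq (f i) n) m.
Lemma lget_lmat m n f i j : (i < m)%N -> (j < n)%N -> lget (lmat m n f) i j = f i j.
Proof. by move=> im jn; rewrite /lget /lmat nth_mkseq // nth_mkseq. Qed.

Definition lmul m k n l1 l2 := lmat m n (fun i j =>
  foldr (fun t acc => lget l1 i t * lget l2 t j + acc) 0 (iota 0 k)).
Definition ladd m n l1 l2 := lmat m n (fun i j => lget l1 i j + lget l2 i j).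
Definition lscale m n c l := lmat m n (fun i j => c * lget l i j).
Definition ltr m n l := lmat n m (fun i j => lget l j i).
Definition lid n (c : int) := lmat n n (fun i j => if i == j then c else 0).
Definition ldelta m n a b (c : int) := lmat m n (fun i j => if (i == a) && (j == b) then c else 0).

Section Mk.
Variable R : comNzRingType.

Lemma sum_foldr k (f : nat -> R) : \sum_(t < k) f t = foldr (fun t acc => f t + acc) 0 (iota 0 k).
Proof.
rewrite -(big_mkord xpredT) /index_iota subn0.
by elim: (iota 0 k) => [|x s IH]; rewrite ?big_nil ?big_cons ?IH.
Qed.

Lemma intr_foldr (f : nat -> int) s :
  (foldr (fun t acc => f t + acc) 0 s)%:~R = foldr (fun t acc => (f t)%:~R + acc) 0 s :> R.
Proof. by elim: s => [|x s IH] //=; rewrite intrD IH. Qed.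

Lemma mkFE m n l i j : mkF R m n l i j = (lget l i j)%:~R.
Proof. by rewrite mxE. Qed.

Lemma mkF_mul m k n l1 l2 : mkF R m k l1 *m mkF R k n l2 = mkF R m n (lmul m k n l1 l2).
Proof.
apply/matrixP=> i j; rewrite mxE mkFE lget_lmat // intr_foldr.
under eq_bigr do rewrite !mkFE.
rewrite (@sum_foldr k (fun t => (lget l1 i t)%:~R * (lget l2 t j)%:~R)).
by elim: (iota 0 k) => //= x s ->; rewrite intrM.
Qed.

Lemma mkF_add m n l1 l2 : mkF R m n l1 + mkF R m n l2 = mkF R m n (ladd m n l1 l2).
Proof. by apply/matrixP=> i j; rewrite !mxE lget_lmat // intrD. Qed.

Lemma mkF_scale m n c l : c%:~R *: mkF R m n l = mkF R m n (lscale m n c l).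
Proof. by apply/matrixP=> i j; rewrite !mxE lget_lmat // intrM. Qed.

Lemma mkF_tr m n l : (mkF R m n l)^T = mkF R n m (ltr m n l).
Proof. by apply/matrixP=> i j; rewrite !mxE lget_lmat. Qed.

Lemma mkF_id n c : mkF R n n (lid n c) = (c%:~R)%:M.
Proof.
apply/matrixP=> i j; rewrite !mxE lget_lmat //.
case: (i =P j) => [->|ne]; first by rewrite !eqxx mulr1n.
have H1 : (i != j :> nat) by apply/eqP=> e; apply: ne; apply: val_inj.
have H2 : (i != j) by apply/eqP.
by rewrite ?(negPf H1) ?(negPf H2) mulr0n.
Qed.

Lemma mkF_delta m n (a : 'I_m) (b : 'I_n) c :
  mkF R m n (ldelta m n a b c) = c%:~R *: delta_mx a b.
Proof.
apply/matrixP=> i j; rewrite !mxE lget_lmat //.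
case: (i =P a) => [->|ne]; case: (j =P b) => [->|ne'];
 rewrite ?eqxx /= ?mulr1 ?mulr0 //;
 try (have H1 : (i != a :> nat) by apply/eqP=> e; apply: ne; apply: val_inj);
 try (have H2 : (j != b :> nat) by apply/eqP=> e; apply: ne'; apply: val_inj);
 try (have H3 : (i != a) by apply/eqP); try (have H4 : (j != b) by apply/eqP);
 by rewrite ?(negPf H1) ?(negPf H2) ?(negPf H3) ?(negPf H4) ?andbF /= ?mulr0.
Qed.

End Mk.


Definition lzero m n := lmat m n (fun _ _ => 0).
Lemma mkF_zero (R : comNzRingType) m n : mkF R m n (lzero m n) = 0.
Proof. by apply/matrixP=> i j; rewrite !mxE lget_lmat. Qed.

Lemma subE (R : comNzRingType) m n (X Y : 'M[R]_(m,n)) : X - Y = X + (-1)%:~R *: Y.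
Proof. by rewrite mulrN1z scaleN1r. Qed.

Definition LA : seq (seq int) := [:: [:: 15; 0; 0; 0; 0];
      [:: 4; 3; 0; 0; 0];
      [:: 0; 4; -1; 0; 0];
      [:: 0; 0; 4; 3; 0];
      [:: 0; 0; 0; 4; 15]].
Definition LB : seq (seq int) := [:: [:: 15; -36; 0; 0; 0];
      [:: 0; 3; -6; 0; 0];
      [:: 0; 0; -1; -6; 0];
      [:: 0; 0; 0; 3; -36];
      [:: 0; 0; 0; 0; 15]].
Definition LC : seq (seq int) := [:: [:: -9; 36; 0; 0; 0];
      [:: -4; 15; 6; 0; 0];
      [:: 0; -4; 23; 6; 0];
      [:: 0; 0; -4; 15; 36];
      [:: 0; 0; 0; -4; -9]].
Definition LD : seq (seq int) := [:: [:: 18; -54; 0; 0; 0];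
      [:: 6; -15; -3; 0; 0];
      [:: 0; 2; 0; 3; 0];
      [:: 0; 0; -2; 15; 54];
      [:: 0; 0; 0; -6; -18]].

Section Main.
Variable F : fieldType.
Hypothesis charF0 : [pchar F] =i pred0.

Lemma natr_neq0 n : (0 < n)%N -> (n%:R : F) != 0.
Proof. by move=> n0; rewrite (pcharf0P _).1 // -lt0n. Qed.

Local Notation s := ((4%:R : F)^-1).
Local Notation mk := (mkF F 5 5).

Lemma quarterE l : quarter_mx F l = s *: mk l.
Proof. by apply/matrixP=> i j; rewrite !mxE mulrC. Qed.

Lemma eA : mxA F = s *: mk LA. Proof. by rewrite /mxA quarterE. Qed.
Lemma eB : mxB F = s *: mk LB. Proof. by rewrite /mxB quarterE. Qed.
Lemma eC : mxC F = s *: mk LC. Proof. by rewrite /mxC quarterE. Qed.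
Lemma eD : mxD F = s *: mk LD. Proof. by rewrite /mxD quarterE. Qed.

Lemma comm_opZ a (X Y : 'M[F]_5) : comm_op (a *: X) (a *: Y) = (a * a) *: comm_op X Y.
Proof. by rewrite /comm_op -!scalemxAl -!scalemxAr !scalerA scalerBr. Qed.

Lemma alphaZ a (X Y Z W : 'M[F]_5) :
  racah_alpha (a *: X) (a *: Y) (a *: Z) (a *: W) = (a * a) *: racah_alpha X Y Z W.
Proof. by rewrite /racah_alpha /comm_op -!scalemxAl -!scalemxAr !scalerA !scalerDr ?scalerN. Qed.
Lemma betaZ a (X Y Z W : 'M[F]_5) :
  racah_beta (a *: X) (a *: Y) (a *: Z) (a *: W) = (a * a) *: racah_beta X Y Z W.
Proof. by rewrite /racah_beta /comm_op -!scalemxAl -!scalemxAr !scalerA !scalerDr ?scalerN. Qed.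
Lemma gammaZ a (X Y Z W : 'M[F]_5) :
  racah_gamma (a *: X) (a *: Y) (a *: Z) (a *: W) = (a * a) *: racah_gamma X Y Z W.
Proof. by rewrite /racah_gamma /comm_op -!scalemxAl -!scalemxAr !scalerA !scalerDr ?scalerN. Qed.

Ltac mknorm := rewrite /comm_op ?subE ?mkF_mul ?mkF_scale ?mkF_mul ?mkF_add.

Lemma commD X1 X2 : ladd 5 5 (lmul 5 5 5 X1 X2) (lscale 5 5 (-1) (lmul 5 5 5 X2 X1)) = lscale 5 5 8 LD ->
  comm_op (s *: mk X1) (s *: mk X2) = 2%:R *: (s *: mk LD).
Proof.
move=> HX; rewrite comm_opZ; mknorm.
rewrite HX.
rewrite -mkF_scale !scalerA; congr (_ *: _).
rewrite -pmulrn; field; exact: natr_neq0.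
Qed.

Lemma mkF_eqZ (a : F) l1 l2 : l1 = l2 -> a *: mk l1 = a *: mk l2.
Proof. by move->. Qed.
Lemma mkF_eqZ0 (a : F) l : l = lzero 5 5 -> a *: mk l = 0.
Proof. by move->; rewrite mkF_zero scaler0. Qed.

Lemma racah_rel : [/\ racah_alpha (mxA F) (mxB F) (mxC F) (mxD F) = 0,
          racah_beta (mxA F) (mxB F) (mxC F) (mxD F) = 0 &
          racah_gamma (mxA F) (mxB F) (mxC F) (mxD F) = 0].
Proof.
rewrite eA eB eC eD alphaZ betaZ gammaZ /racah_alpha /racah_beta /racah_gamma.
by split; mknorm; apply: mkF_eqZ0; vm_compute.
Qed.

Lemma racah_mod : racah_module (mxA F) (mxB F) (mxC F) (mxD F).
Proof.
have [ha hb hc] := racah_rel.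
split; first by rewrite eA eB eC eD; split; apply: commD; vm_compute; reflexivity.
rewrite ha hb hc; have c0 X : comm_op 0 X = 0 by rewrite /comm_op mul0mx mulmx0 subrr.
by split; split.
Qed.

Lemma intr_neq0 (z : int) : z != 0 -> (z%:~R : F) != 0.
Proof.
case: z => n.
  move=> hn; rewrite -pmulrn natr_neq0 // lt0n; apply: contra hn => /eqP -> //.
by move=> _; rewrite NegzE intrN oppr_eq0 -pmulrn natr_neq0.
Qed.

Definition lowb (M : 'M[F]_5) := forall q : {poly F}, horner_mx M q = 0 -> (size q <= 5)%N -> q = 0.

Lemma hornerE5 (M : 'M[F]_5) (q : {poly F}) : (size q <= 5)%N -> horner_mx M q = \sum_(i < 5) q`_i *: M ^+ i.
Proof.
move=> sq; rewrite {1}(_ : q = \poly_(i < 5) q`_i); last first.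
  apply/polyP=> i; rewrite coef_poly; case: ltnP => // hi.
  by rewrite nth_default //; exact: leq_trans sq hi.
rewrite poly_def rmorph_sum; apply: eq_bigr => i _.
by rewrite -mul_polyC rmorphM /= horner_mx_C rmorphXn /= horner_mx_X -mulmxE mul_scalar_mx.
Qed.

Lemma lowbZ a M : a != 0 -> lowb M -> lowb (a *: M).
Proof.
move=> a0 lM q hq sq.
have h' : horner_mx M (\poly_(i < 5) (q`_i * a ^+ i)) = 0.
  transitivity (horner_mx (a *: M) q); last exact: hq.
  rewrite !hornerE5 ?size_poly //.
  by apply: eq_bigr => i _; rewrite coef_poly ltn_ord exprZn scalerA.
have q'0 := lM _ h' (size_poly _ _).
apply/polyP=> i; rewrite coef0; case: (ltnP i 5) => hi.
  move/polyP/(_ i): q'0; rewrite coef_poly hi coef0 => /eqP.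
  by rewrite mulf_eq0 expf_eq0 (negPf a0) andbF orbF => /eqP.
by rewrite nth_default //; exact: leq_trans sq hi.
Qed.

Lemma lowerK (M : 'M[F]_5) (v : 'cV[F]_5) (q : {poly F}) : (size q <= 5)%N -> horner_mx M q = 0 ->
  (\row_(i < 5) q`_i) *m (\matrix_(i < 5) (M ^+ i *m v)^T) = 0.
Proof.
move=> sq hq; rewrite mulmx_sum_row.
have: (horner_mx M q *m v)^T = 0 by rewrite hq mul0mx trmx0.
rewrite hornerE5 // mulmx_suml raddf_sum /= => h; apply: (etrans _ h).
by apply: eq_bigr => i _; rewrite rowK mxE -scalemxAl linearZ.
Qed.

Definition Kint (L Lv : seq (seq int)) :=
  lmat 5 5 (fun i j => lget (iter i (lmul 5 5 1 L) Lv) j 0).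

Lemma powv L Lv i : mk L ^+ i *m mkF F 5 1 Lv = mkF F 5 1 (iter i (lmul 5 5 1 L) Lv).
Proof.
elim: i => [|i IH]; first by rewrite expr0 mul1mx.
by rewrite exprS -mulmxE -mulmxA IH mkF_mul.
Qed.

Lemma Kint_eq L Lv : \matrix_(i < 5) (mk L ^+ i *m mkF F 5 1 Lv)^T = mk (Kint L Lv).
Proof. by apply/matrixP=> i j; rewrite mxE [in LHS]mxE powv mkFE [in RHS]mkFE lget_lmat. Qed.

Lemma lowb_int L Lv Q :
  all (fun i => all (fun j => (i < j)%N ==> (lget (lmul 5 5 5 (Kint L Lv) Q) i j == 0)) (iota 0 5)) (iota 0 5) ->
  all (fun i => lget (lmul 5 5 5 (Kint L Lv) Q) i i != 0) (iota 0 5) ->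
  lowb (mk L).
Proof.
move=> htri hdiag q hq sq.
have hK := lowerK (mkF F 5 1 Lv) sq hq.
rewrite Kint_eq in hK.
have {}hK : (\row_(i < 5) q`_i) *m mk (lmul 5 5 5 (Kint L Lv) Q) = 0.
  by rewrite -mkF_mul mulmxA hK mul0mx.
set K := mk _ in hK.
have Ku : K \in unitmx.
  rewrite unitmxE unitfE det_trig.
    apply/prodf_neq0 => i _; rewrite mkFE intr_neq0 //.
    by move/allP: hdiag; apply; rewrite mem_iota /=.
  apply/is_trig_mxP => i j lij; rewrite mkFE.
  have hi : (nat_of_ord i) \in iota 0 5 by rewrite mem_iota /=.
  have hj : (nat_of_ord j) \in iota 0 5 by rewrite mem_iota /=.
  have := allP htri _ hi; move=> /allP /(_ _ hj).
  by rewrite lij /= => /eqP ->.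
have := congr1 (mulmx^~ (invmx K)) hK; rewrite -mulmxA mulmxV // mulmx1 mul0mx => hc.
apply/polyP=> i; rewrite coef0; case: (ltnP i 5) => hi.
  by move/matrixP/(_ 0 (Ordinal hi)): hc; rewrite !mxE.
by rewrite nth_default //; exact: leq_trans sq hi.
Qed.


Lemma scal_n (n : nat) : ((n%:R / 4%:R)%:M : 'M[F]_5) = s *: mk (lid 5 n).
Proof. by rewrite mkF_id scale_scalar_mx -pmulrn mulrC. Qed.

Lemma scal1 : ((1 / 4%:R)%:M : 'M[F]_5) = s *: mk (lid 5 1).
Proof. by rewrite mkF_id scale_scalar_mx div1r mulr1. Qed.

Ltac horner_tac :=
  rewrite /racah_minpoly !rmorphM !rmorphXn /= rmorphD !rmorphB /= horner_mx_X !horner_mx_C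
    scal1 !scal_n -scalerDr -!scalerBr !expr2 -!mulmxE -!scalemxAl -!scalemxAr !scalerA
    !subE !mkF_scale !mkF_add !mkF_mul; apply: mkF_eqZ0; vm_compute; reflexivity.





End Main.
Section Horn.
Variable F : fieldType.
Local Notation s := ((4%:R : F)^-1).
Local Notation mk := (mkF F 5 5).
Ltac horner_tac :=
  rewrite /racah_minpoly rmorphM rmorphM !rmorphXn /= rmorphD !rmorphB /= horner_mx_X !horner_mx_C
    scal1 !scal_n -scalerDr -!scalerBr !expr2 -!mulmxE !subE !mkF_scale !mkF_add;
  do ![rewrite -scalemxAl | rewrite -scalemxAr | rewrite scalerA | rewrite mkF_mul];
  apply: mkF_eqZ0; vm_compute; reflexivity.

Lemma hornA : horner_mx (s *: mk LA) (racah_minpoly F) = 0. Proof. horner_tac. Qed.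
Lemma hornB : horner_mx (s *: mk LB) (racah_minpoly F) = 0. Proof. horner_tac. Qed.
Lemma hornC : horner_mx (s *: mk LC) (racah_minpoly F) = 0. Proof. horner_tac. Qed.
End Horn.

Definition Le0 : seq (seq int) := [:: [:: 1]; [:: 0]; [:: 0]; [:: 0]; [:: 0]].
Definition Le4 : seq (seq int) := [:: [:: 0]; [:: 0]; [:: 0]; [:: 0]; [:: 1]].
Definition Lrev : seq (seq int) := lmat 5 5 (fun i j => if (i + j == 4)%N then 1 else 0).

Section MinP.
Variable F : fieldType.
Hypothesis charF0 : [pchar F] =i pred0.
Local Notation s := ((4%:R : F)^-1).
Local Notation mk := (mkF F 5 5).

Lemma s_neq0 : s != 0.
Proof. by rewrite invr_neq0 // natr_neq0. Qed.

Lemma racah_monic : racah_minpoly F \is monic.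
Proof. by rewrite /racah_minpoly !rpredM ?rpredX ?monicXsubC ?monicXaddC. Qed.

Lemma racah_size : size (racah_minpoly F) = 6.
Proof.
rewrite /racah_minpoly size_Mmonic ?size_Mmonic ?size_XaddC ?size_exp_XsubC ?size_XsubC //
  ?monic_neq0 ?rpredM ?rpredX ?monicXsubC ?monicXaddC //.
Qed.

Lemma minpoly_eq (M : 'M[F]_5) : horner_mx M (racah_minpoly F) = 0 -> lowb M ->
  mxminpoly M = racah_minpoly F.
Proof.
move=> h lM.
have dv := mxminpoly_min h.
have sz : size (mxminpoly M) = 6.
  apply/eqP; rewrite eqn_leq -{1}racah_size (dvdp_leq _ dv) ?monic_neq0 ?racah_monic //=.
  rewrite ltnNge; apply/negP => s5.
  have := lM _ (mx_root_minpoly M) s5; apply/eqP; exact: monic_neq0 (mxminpoly_monic M).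
apply/eqP; rewrite -eqp_monic ?mxminpoly_monic ?racah_monic //.
by rewrite -dvdp_size_eqp // sz racah_size.
Qed.

Lemma minA : mxminpoly (mxA F) = racah_minpoly F.
Proof.
rewrite eA; apply: minpoly_eq; first exact: hornA.
apply: lowbZ => //; first exact: s_neq0.
by apply: (@lowb_int _ charF0 _ Le0 (lid 5 1)); vm_compute.
Qed.
Lemma minB : mxminpoly (mxB F) = racah_minpoly F.
Proof.
rewrite eB; apply: minpoly_eq; first exact: hornB.
apply: lowbZ => //; first exact: s_neq0.
by apply: (@lowb_int _ charF0 _ Le4 Lrev); vm_compute.
Qed.
Lemma minC : mxminpoly (mxC F) = racah_minpoly F.
Proof.
rewrite eC; apply: minpoly_eq; first exact: hornC.
apply: lowbZ => //; first exact: s_neq0.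
by apply: (@lowb_int _ charF0 _ Le0 (lid 5 1)); vm_compute.
Qed.
End MinP.

Lemma sq_not_dvd (F : fieldType) (a : F) rs : uniq rs ->
  ~~ (('X - a%:P) ^+ 2 %| \prod_(x <- rs) ('X - x%:P)).
Proof.
move=> urs; apply/negP => hd.
have ha : a \in rs.
  rewrite -root_prod_XsubC -dvdp_XsubCl; apply: dvdp_trans hd.
  by rewrite expr2 dvdp_mulIl.
move: hd; rewrite (big_rem a ha) /= expr2 dvdp_mul2l ?polyXsubC_eq0 //.
by rewrite dvdp_XsubCl root_prod_XsubC mem_rem_uniqF.
Qed.

Lemma not_diag (F : fieldType) (M : 'M[F]_5) : mxminpoly M = racah_minpoly F -> ~ diagonalizable M.
Proof.
move=> hm /diagonalizableP [rs urs dv]; rewrite hm in dv.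
have := sq_not_dvd (3%:R / 4%:R) urs; apply/negP/negPn.
apply: dvdp_trans dv; apply: dvdp_trans (dvdp_mulIl _ _); exact: dvdp_mulIr.
Qed.

Section Irr.
Variable F : fieldType.
Hypothesis charF0 : [pchar F] =i pred0.
Local Notation s := ((4%:R : F)^-1).
Local Notation mk := (mkF F 5 5).
Variable S : 'M[F]_5.
Definition stab (X : 'M[F]_5) := (S *m X <= S)%MS.

Lemma stab_mul X Y : stab X -> stab Y -> stab (X *m Y).
Proof. by move=> hX hY; rewrite /stab mulmxA; apply: submx_trans (submxMr Y hX) hY. Qed.
Lemma stab_add X Y : stab X -> stab Y -> stab (X + Y).
Proof. by move=> hX hY; rewrite /stab mulmxDr addmx_sub. Qed.
Lemma stab_scale a X : stab X -> stab (a *: X).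
Proof. by move=> hX; rewrite /stab -scalemxAr scalemx_sub. Qed.
Lemma stab_unscale a X : a != 0 -> stab (a *: X) -> stab X.
Proof. by move=> a0 h; have := stab_scale a^-1 h; rewrite scalerA mulVf // scale1r. Qed.
Lemma stab_scalar a : stab a%:M.
Proof. by rewrite /stab mul_mx_scalar scalemx_sub. Qed.

Lemma stabL_mul L1 L2 : stab (mk L1) -> stab (mk L2) -> stab (mk (lmul 5 5 5 L1 L2)).
Proof. by move=> h1 h2; rewrite -mkF_mul stab_mul. Qed.
Lemma stabL_shift L c : stab (mk L) -> stab (mk (ladd 5 5 L (lid 5 c))).
Proof. by move=> h; rewrite -mkF_add stab_add // mkF_id stab_scalar. Qed.

Lemma stab_delta L1 L2 (a b : 'I_5) c : stab (mk L1) -> stab (mk L2) ->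
  lmul 5 5 5 L1 L2 == ldelta 5 5 a b c -> c != 0 -> stab (delta_mx a b).
Proof.
move=> h1 h2 /eqP e c0; have := stabL_mul h1 h2; rewrite e mkF_delta.
by apply: stab_unscale; rewrite intr_neq0.
Qed.

Lemma stab_tr (M : 'M[F]_5) L : M = s *: mk L -> op_invariant S M -> stab (mk (ltr 5 5 L)).
Proof.
move=> -> h; apply: (@stab_unscale s); first by rewrite invr_neq0 // natr_neq0.
by rewrite -mkF_tr -linearZ.
Qed.

End Irr.

Notation o k := (@Ordinal 5 k isT).

Lemma rv_delta (F : fieldType) (w : 'rV[F]_5) (k j : 'I_5) :
  w *m delta_mx k j = w 0 k *: delta_mx 0 j.
Proof.
apply/matrixP=> a b; rewrite !mxE (bigD1 k) //= big1 => [|t tk]; last first.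
  by rewrite !mxE (negPf tk) mulr0.
by rewrite !mxE eqxx /= addr0 (ord1 a) eqxx.
Qed.

Section Irr2.
Variable F : fieldType.
Hypothesis charF0 : [pchar F] =i pred0.
Local Notation s := ((4%:R : F)^-1).
Local Notation mk := (mkF F 5 5).

Lemma irr : racah_irreducible (mxA F) (mxB F) (mxC F) (mxD F).
Proof.
split => // S hA hB _ _.
have sA := stab_tr charF0 (eA F) hA; have sB := stab_tr charF0 (eB F) hB.
have sd (k j : 'I_5) : stab S (delta_mx k j) -> stab S (mk (ldelta 5 5 k j 1)).
  by move=> h; rewrite mkF_delta; apply: stab_scale.
have d40 : stab S (delta_mx (o 4) (o 0)).
  apply: (stab_delta charF0 (c := 6 ^+ 6)
    (L1 := lmul 5 5 5 (lmul 5 5 5 (ladd 5 5 (ltr 5 5 LB) (lid 5 1)) (ladd 5 5 (ltr 5 5 LB) (lid 5 (-3))))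
                    (ladd 5 5 (ltr 5 5 LB) (lid 5 (-3))))
    (L2 := ladd 5 5 (ltr 5 5 LB) (lid 5 (-15)))).
  - exact: (stabL_mul (stabL_mul (stabL_shift _ sB) (stabL_shift _ sB)) (stabL_shift _ sB)).
  - exact: (stabL_shift _ sB).
  - vm_compute; reflexivity.
  - by apply: expf_neq0.
have step (k k' : 'I_5) (c : int) :
   lmul 5 5 5 (ladd 5 5 (ltr 5 5 LA) (lid 5 c)) (ldelta 5 5 k (0 : 'I_5) 1) = ldelta 5 5 k' (0 : 'I_5) 4 ->
   stab S (delta_mx k 0) -> stab S (delta_mx k' 0).
  move=> e h.
  exact: (@stab_delta F charF0 S (ladd 5 5 (ltr 5 5 LA) (lid 5 c)) (ldelta 5 5 k (0 : 'I_5) 1) k' 0 4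
           (stabL_shift _ sA) (sd _ _ h) (introT eqP e) isT).
have step' (j j' : 'I_5) (c : int) :
   lmul 5 5 5 (ldelta 5 5 (0 : 'I_5) j 1) (ladd 5 5 (ltr 5 5 LA) (lid 5 c)) = ldelta 5 5 (0 : 'I_5) j' 4 ->
   stab S (delta_mx 0 j) -> stab S (delta_mx 0 j').
  move=> e h.
  exact: (@stab_delta F charF0 S (ldelta 5 5 (0 : 'I_5) j 1) (ladd 5 5 (ltr 5 5 LA) (lid 5 c)) 0 j' 4
           (sd _ _ h) (stabL_shift _ sA) (introT eqP e) isT).
have d30 := step (o 4) (o 3) (-15) ltac:(by vm_compute) d40.
have d20 := step (o 3) (o 2) (-3) ltac:(by vm_compute) d30.
have d10 := step (o 2) (o 1) 1 ltac:(by vm_compute) d20.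
have d00 := step (o 1) (o 0) (-3) ltac:(by vm_compute) d10.
have d01 := step' (o 0) (o 1) (-15) ltac:(by vm_compute) d00.
have d02 := step' (o 1) (o 2) (-3) ltac:(by vm_compute) d01.
have d03 := step' (o 2) (o 3) 1 ltac:(by vm_compute) d02.
have d04 := step' (o 3) (o 4) (-3) ltac:(by vm_compute) d03.
have dk0 (k : 'I_5) : stab S (delta_mx k 0).
  case: k => [[|[|[|[|[|//]]]]] p];
  [ have -> : Ordinal p = o 0 by apply: val_inj
  | have -> : Ordinal p = o 1 by apply: val_inj
  | have -> : Ordinal p = o 2 by apply: val_inj
  | have -> : Ordinal p = o 3 by apply: val_inj
  | have -> : Ordinal p = o 4 by apply: val_inj ] => //.
have d0j (j : 'I_5) : stab S (delta_mx 0 j).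
  case: j => [[|[|[|[|[|//]]]]] p];
  [ have -> : Ordinal p = o 0 by apply: val_inj
  | have -> : Ordinal p = o 1 by apply: val_inj
  | have -> : Ordinal p = o 2 by apply: val_inj
  | have -> : Ordinal p = o 3 by apply: val_inj
  | have -> : Ordinal p = o 4 by apply: val_inj ] => //.
have dkj (k j : 'I_5) : stab S (delta_mx k j).
  by have := stab_mul (dk0 k) (d0j j); rewrite mul_delta_mx.
have [S0|Sn0] := eqVneq S 0; first by left.
right.
have [i hi] : exists i, row i S != 0.
  case: (pickP (fun i => row i S != 0)) => [i hi|h]; first by exists i.
  suff S0 : S = 0 by rewrite S0 eqxx in Sn0.
  by apply/row_matrixP => i; rewrite row0; apply/eqP/negbFE/h.
have [k hk] : exists k, row i S 0 k != 0.
  case: (pickP (fun k => row i S 0 k != 0)) => [k hk|h]; first by exists k.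
  suff w0 : row i S = 0 by rewrite w0 eqxx in hi.
  by apply/matrixP => a b; rewrite (ord1 a) [RHS]mxE; apply/eqP/negbFE/h.
rewrite -sub1mx; apply/row_subP => j.
rewrite rowE mulmx1.
have h1 : (row i S *m delta_mx k j <= S)%MS.
  by apply: submx_trans (dkj k j); apply: submxMr; exact: row_sub.
rewrite rv_delta in h1.
by have := scalemx_sub (row i S 0 k)^-1 h1; rewrite scalerA mulVf // scale1r.
Qed.
End Irr2.

Theorem mainTheorem19 (F : closedFieldType) (charF0 : [pchar F] =i pred0) :
  [/\ racah_module (mxA F) (mxB F) (mxC F) (mxD F),
      [/\ racah_alpha (mxA F) (mxB F) (mxC F) (mxD F) = 0,
          racah_beta (mxA F) (mxB F) (mxC F) (mxD F) = 0 &
          racah_gamma (mxA F) (mxB F) (mxC F) (mxD F) = 0],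
      racah_irreducible (mxA F) (mxB F) (mxC F) (mxD F),
      [/\ mxminpoly (mxA F) = racah_minpoly F,
          mxminpoly (mxB F) = racah_minpoly F &
          mxminpoly (mxC F) = racah_minpoly F]
    & [/\ ~ diagonalizable (mxA F), ~ diagonalizable (mxB F)
        & ~ diagonalizable (mxC F)]].
Proof.
split.
- exact: racah_mod.
- exact: racah_rel.
- exact: irr.
- by split; [exact: minA | exact: minB | exact: minC].
- by split; apply: not_diag; [exact: minA | exact: minB | exact: minC].
Qed.
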